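(* Fix $\pi_1,\pi_1'\in(0,1)$ and set $\pi_2=1-\pi_1$, $\pi_2'=1-\pi_1'$. For real numbers $\mu_1<\mu_2$ and $\sigma>0$, define the densities on $\mathbb{R}$ $$p(x)=\pi_1\mathcal{N}(x;\mu_1,\sigma^2)+\pi_2\mathcal{N}(x;\mu_2,\sigma^2),\qquad p'(x)=\pi_1'\mathcal{N}(x;\mu_1,\sigma^2)+\pi_2'\mathcal{N}(x;\mu_2,\sigma^2),$$ which differ only in their mixing proportions. Fix $\delta\neq 0$ and put $x=\frac{\mu_1+\mu_2}{2}+\delta$. Then the dependence of the score $\nabla_x\log p(x)$ on the mixing proportion vanishes as $\frac{\mu_1-\mu_2}{\sigma^2}\to-\infty$: for every $\varepsilon>0$ there is $K>0$ such that for all $\mu_1<\mu_2$ and $\sigma>0$ with $\frac{\mu_1-\mu_2}{\sigma^2}<-K$, $$\Bigl|\nabla_x\log p(x)-\nabla_x\log p'(x)\Bigr|<\varepsilon .$$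
   Context: $\mathcal{N}(x;\mu,\sigma^2)$ denotes the Gaussian density with mean $\mu$ and variance $\sigma^2$. The score of a density $p$ on $\mathbb{R}$ is $\nabla_x\log p(x)$, the derivative with respect to $x$ (not with respect to parameters). *)

(* Defs.v *)
From Stdlib Require Import Reals Lra.
From Coquelicot Require Import Coquelicot.
Open Scope R_scope.

Definition gauss (x mu s2 : R) : R :=
  / sqrt (2 * PI * s2) * exp (- (x - mu) ^ 2 / (2 * s2)).

Definition mix2 (pi1 mu1 mu2 sigma x : R) : R :=
  pi1 * gauss x mu1 (sigma ^ 2) + (1 - pi1) * gauss x mu2 (sigma ^ 2).

Definition score (p : R -> R) (x : R) : R := Derive (fun y => ln (p y)) x.

(* Main.v *)
Require Import Defs.
From Stdlib Require Import Reals Lra.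
From Coquelicot Require Import Coquelicot.
Open Scope R_scope.
Definition E (x mu sigma : R) := exp (- (x - mu) ^ 2 / (2 * sigma^2)).
Lemma score_mix p mu1 mu2 sigma x : 0<p<1 -> 0<sigma ->
  score (mix2 p mu1 mu2 sigma) x = -(x-mu2)/sigma^2 -
   (p*E x mu1 sigma/(p*E x mu1 sigma+(1-p)*E x mu2 sigma)) * (mu2-mu1)/sigma^2.
Proof.
intros Hp Hs. unfold score, mix2, gauss, E.
assert (H1: forall m, - ((x + - m) * ((x + - m) * 1)) * / (2 * (sigma * (sigma * 1))) = - (x - m) ^ 2 / (2 * sigma ^ 2)) by (intros; field; lra).
assert (Hs2 : sigma * (sigma * 1) = sigma ^ 2) by ring.
assert (Hc : 0 < / sqrt (2 * PI * sigma ^ 2)).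
{ apply Rinv_0_lt_compat, sqrt_lt_R0. pose proof PI_RGT_0. pose proof (pow_lt sigma 2 Hs). nra. }
apply is_derive_unique. auto_derive; rewrite ?H1, ?Hs2;
set (c := / sqrt (2 * PI * sigma ^ 2)) in *;
set (e1 := exp (- (x - mu1) ^ 2 / (2 * sigma ^ 2)));
set (e2 := exp (- (x - mu2) ^ 2 / (2 * sigma ^ 2)));
assert (0 < e1) by apply exp_pos; assert (0 < e2) by apply exp_pos.
- assert (0 < p*e1) by nra. assert (0 < (1-p)*e2) by nra. nra.
- assert (0 < p*e1) by nra. assert (0 < (1-p)*e2) by nra.
  field. split; [lra|]. split; [lra|]. nra.
Qed.
Lemma tail C a eps t : 0<C->0<a->0<eps-> 4*C/(eps*a^2) < t -> t*C*exp(-(t*a)) < eps.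
Proof.
intros HC Ha He Ht.
assert (Hq : 0 < 4*C/(eps*a^2)) by (apply Rdiv_lt_0_compat; [lra| apply Rmult_lt_0_compat; [lra| apply pow_lt; lra]]).
assert (Ht0 : 0 < t) by lra.
assert (Hta : 0 < t*a/2) by (apply Rmult_lt_0_compat; [nra|lra]).
assert (Hex : exp (t*a) = exp (t*a/2) * exp (t*a/2)) by (rewrite <- exp_plus; f_equal; field).
pose proof (exp_ineq1_le (t*a/2)) as Hi.
assert (Hbig : (t*a/2)^2 < exp (t*a)) by (rewrite Hex; nra).
assert (H4 : 4*C < eps*a^2*t).
{ apply (Rmult_lt_compat_l (eps*a^2)) in Ht; [|apply Rmult_lt_0_compat; [lra| apply pow_lt; lra]].
  replace (eps*a^2*(4*C/(eps*a^2))) with (4*C) in Ht by (field; split; lra). lra. }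
rewrite exp_Ropp.
assert (Hp : 0 < exp (t*a)) by apply exp_pos.
apply (Rmult_lt_reg_r (exp (t*a))); auto.
replace (t*C*/exp(t*a)*exp(t*a)) with (t*C) by (field; lra).
assert (t*C*4 < eps*a^2*t*t) by nra.
assert (eps * ((t*a/2)^2) < eps * exp (t*a)) by (apply Rmult_lt_compat_l; lra).
nra.
Qed.
Lemma wbounds p e1 e2 : 0<p<1 -> 0<e1 -> 0<e2 ->
  0 <= p*e1/(p*e1+(1-p)*e2) <= e1/((1-p)*e2) /\
  0 <= 1 - p*e1/(p*e1+(1-p)*e2) <= e2/(p*e1).
Proof.
intros Hp H1 H2.
assert (0 < p*e1) by nra. assert (0 < (1-p)*e2) by nra.
assert (Hw: 1 - p*e1/(p*e1+(1-p)*e2) = (1-p)*e2/(p*e1+(1-p)*e2)) by (field; lra).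
rewrite Hw. repeat split.
- apply Rlt_le, Rdiv_lt_0_compat; lra.
- apply Rmult_le_reg_r with ((1-p)*e2 * (p*e1+(1-p)*e2)). nra.
  replace (p * e1 / (p * e1 + (1 - p) * e2) * ((1 - p) * e2 * (p * e1 + (1 - p) * e2))) with (p*e1*((1-p)*e2)) by (field; lra).
  replace (e1 / ((1 - p) * e2) * ((1 - p) * e2 * (p * e1 + (1 - p) * e2))) with (e1*(p*e1+(1-p)*e2)) by (field; lra).
  assert (0 <= p*e1*e1) by nra. assert (0 <= (1-p)*(1-p)*e1*e2) by (repeat apply Rmult_le_pos; lra).
  assert (e1*(p*e1+(1-p)*e2) - p*e1*((1-p)*e2) = p*e1*e1 + (1-p)*(1-p)*e1*e2) by ring. lra.
- apply Rlt_le, Rdiv_lt_0_compat; lra.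
- apply Rmult_le_reg_r with ((p*e1) * (p*e1+(1-p)*e2)). nra.
  replace ((1-p) * e2 / (p * e1 + (1 - p) * e2) * ((p*e1) * (p * e1 + (1 - p) * e2))) with ((1-p)*e2*(p*e1)) by (field; lra).
  replace (e2 / (p*e1) * ((p*e1) * (p * e1 + (1 - p) * e2))) with (e2*(p*e1+(1-p)*e2)) by (field; lra).
  assert (0 <= (1-p)*e2*e2) by nra. assert (0 <= p*p*e1*e2) by (repeat apply Rmult_le_pos; lra).
  assert (e2*(p*e1+(1-p)*e2) - (1-p)*e2*(p*e1) = (1-p)*e2*e2 + p*p*e1*e2) by ring. lra.
Qed.
Theorem lemma2 (pi1 pi1' delta : R) :
  0 < pi1 < 1 -> 0 < pi1' < 1 -> delta <> 0 ->
  forall eps : R, 0 < eps ->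
  exists K : R, 0 < K /\
    forall mu1 mu2 sigma : R, mu1 < mu2 -> 0 < sigma ->
      (mu1 - mu2) / sigma ^ 2 < - K ->
      let x := (mu1 + mu2) / 2 + delta in
      Rabs (score (mix2 pi1 mu1 mu2 sigma) x
            - score (mix2 pi1' mu1 mu2 sigma) x) < eps.
Proof.
intros Hp Hp' Hd eps He.
set (C := 1/pi1 + 1/pi1' + 1/(1-pi1) + 1/(1-pi1')).
assert (HC : 0 < C).
{ unfold C. assert (0 < 1/pi1) by (apply Rdiv_lt_0_compat; lra).
  assert (0 < 1/pi1') by (apply Rdiv_lt_0_compat; lra).
  assert (0 < 1/(1-pi1)) by (apply Rdiv_lt_0_compat; lra).
  assert (0 < 1/(1-pi1')) by (apply Rdiv_lt_0_compat; lra). lra. }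
assert (Hd2 : 0 < delta^2) by (apply pow2_gt_0; auto).
exists (4*C/(eps*delta^2)).
assert (Hq : 0 < 4*C/(eps*delta^2)) by (apply Rdiv_lt_0_compat; [lra| apply Rmult_lt_0_compat; lra]).
split; auto.
intros mu1 mu2 sigma H12 Hs Ht x.
assert (Hs2 : 0 < sigma^2) by (apply pow_lt; lra).
set (t := (mu2 - mu1)/sigma^2).
assert (HtK : 4*C/(eps*delta^2) < t).
{ unfold t. replace ((mu2 - mu1)/sigma^2) with (- ((mu1 - mu2)/sigma^2)) by (field; lra). lra. }
rewrite !score_mix; auto.
assert (HE : E x mu1 sigma = E x mu2 sigma * exp (-(t*delta))).
{ unfold E. rewrite <- exp_plus. f_equal. unfold x, t. field. lra. }
set (e2 := E x mu2 sigma) in *.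
set (e1 := E x mu1 sigma) in *.
assert (H1 : 0 < e1) by apply exp_pos. assert (H2 : 0 < e2) by apply exp_pos.
set (w := pi1*e1/(pi1*e1+(1-pi1)*e2)).
set (w' := pi1'*e1/(pi1'*e1+(1-pi1')*e2)).
replace (- (x - mu2) / sigma ^ 2 - w * (mu2 - mu1) / sigma ^ 2 -
   (- (x - mu2) / sigma ^ 2 - w' * (mu2 - mu1) / sigma ^ 2)) with ((w'-w)*t)
  by (unfold t; field; lra).
destruct (wbounds pi1 e1 e2 Hp H1 H2) as [[Wa Wb] [Wc Wd]].
destruct (wbounds pi1' e1 e2 Hp' H1 H2) as [[Wa' Wb'] [Wc' Wd']].
fold w in Wa, Wb, Wc, Wd. fold w' in Wa', Wb', Wc', Wd'.
assert (Ht0 : 0 < t) by lra.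
rewrite Rabs_mult, (Rabs_pos_eq t) by lra.
destruct (Rlt_or_le 0 delta) as [Hpos|Hneg].
-
  assert (Hb : Rabs (w'-w) <= C * exp (-(t*delta))).
  { assert (Hx : e1/((1-pi1)*e2) = 1/(1-pi1) * exp (-(t*delta))) by (rewrite HE; field; lra).
    assert (Hx' : e1/((1-pi1')*e2) = 1/(1-pi1') * exp (-(t*delta))) by (rewrite HE; field; lra).
    assert (Hex := exp_pos (-(t*delta))).
    assert (0 < 1/pi1) by (apply Rdiv_lt_0_compat; lra).
    assert (0 < 1/pi1') by (apply Rdiv_lt_0_compat; lra).
    unfold C. apply Rabs_le. nra. }
  pose proof (tail C delta eps t HC Hpos He HtK).
  assert (Rabs (w'-w) * t <= t * C * exp (-(t*delta))) by nra. lra.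
- assert (Hn : delta < 0) by lra.
  assert (Hb : Rabs (w'-w) <= C * exp (-(t*(-delta)))).
  { assert (Hx : e2/(pi1*e1) = 1/pi1 * exp (-(t*(-delta)))).
    { rewrite HE. assert (Hv: exp(-(t*(-delta))) = / exp(-(t*delta))) by (rewrite <- exp_Ropp; f_equal; ring).
      assert (Hex := exp_pos (-(t*delta))). rewrite Hv. field. repeat split; lra. }
    assert (Hx' : e2/(pi1'*e1) = 1/pi1' * exp (-(t*(-delta)))).
    { rewrite HE. assert (Hv: exp(-(t*(-delta))) = / exp(-(t*delta))) by (rewrite <- exp_Ropp; f_equal; ring).
      assert (Hex := exp_pos (-(t*delta))). rewrite Hv. field. repeat split; lra. }
    assert (Hex := exp_pos (-(t*(-delta)))).
    assert (0 < 1/(1-pi1)) by (apply Rdiv_lt_0_compat; lra).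
    assert (0 < 1/(1-pi1')) by (apply Rdiv_lt_0_compat; lra).
    unfold C. apply Rabs_le. nra. }
  replace (delta^2) with ((-delta)^2) in HtK by ring.
  pose proof (tail C (-delta) eps t HC ltac:(lra) He HtK).
  assert (Rabs (w'-w) * t <= t * C * exp (-(t*(-delta)))) by nra. lra.
Qed.
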